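(* Let $q\ge 3$. The following hold. (1) If $\mathbf u\in\mathbb R^2$ is such that the orbit $G_q\mathbf u=\{A\mathbf u: A\in G_q\}$ is a discrete subset of $\mathbb R^2$, then either $\mathbf u=(0,0)^T$ or there is a nonzero $\alpha\in\mathbb R$ with $G_q\mathbf u=\alpha\Lambda_q$. (2) No element $\mathbf v\in\Lambda_q$ satisfies $Q_q(\mathbf v)<1$, where $Q_q((x,y)^T)=x^2-\lambda_q xy+y^2$; i.e. the open interior of the ellipse $Q_q=1$ contains no element of $\Lambda_q$. (3) $\mathfrak w_i^q\wedge\mathfrak w_{i+1}^q=1$ for $i=0,1,\dots,q-2$, and $\mathfrak w_0^q\wedge\mathfrak w_{q-1}^q=1$. (4) If $\mathbf u_0,\mathbf u_1\in\Lambda_q$ satisfy $\mathbf u_0\wedge\mathbf u_1=1$, then there exists $A\in G_q$ with $A\mathbf u_0=(1,0)^T$ and $A\mathbf u_1=(0,1)^T$; equivalently, the matrix with columns $\mathbf u_0,\mathbf u_1$ belongs to $G_q$. Thus unimodular pairs of elements of $\Lambda_q$ are exactly the column pairs of matrices in $G_q$.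
   Context: Fix an integer $q\ge3$, let $\lambda_q=2\cos(\pi/q)$, and let $G_q\subset \mathrm{SL}(2,\mathbb R)$ be the Hecke triangle group generated by $S=\begin{pmatrix}0&-1\\1&0\end{pmatrix}$ and $T_q=\begin{pmatrix}1&\lambda_q\\0&1\end{pmatrix}$, acting linearly on $\mathbb R^2$ (column vectors). Set $\Lambda_q=G_q(1,0)^T=\{A(1,0)^T:A\in G_q\}$. Let $U_q=T_qS=\begin{pmatrix}\lambda_q&-1\\1&0\end{pmatrix}$ and $\mathfrak w_i^q=(x_i^q,y_i^q)^T=U_q^i(1,0)^T$ for $i=0,1,\dots,2q-1$ (so $\mathfrak w_0^q=(1,0)^T$, $\mathfrak w_1^q=(\lambda_q,1)^T$, $\mathfrak w_{q-1}^q=(0,1)^T$). For $\mathbf u_0=(x_0,y_0)^T,\mathbf u_1=(x_1,y_1)^T$, the wedge product is $\mathbf u_0\wedge\mathbf u_1=x_0y_1-x_1y_0$; the pair is called unimodular if $\mathbf u_0\wedge\mathbf u_1=1$. *)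

(* Defs.v *)
From Stdlib Require Import Reals Lra Lia.
Open Scope R_scope.

Definition lam (q : nat) : R := 2 * cos (PI / INR q).

Record mat2 : Type := Mat2 { m11 : R; m12 : R; m21 : R; m22 : R }.
Definition vec2 : Type := (R * R)%type.

Definition mmul (A B : mat2) : mat2 :=
  Mat2 (m11 A * m11 B + m12 A * m21 B) (m11 A * m12 B + m12 A * m22 B)
       (m21 A * m11 B + m22 A * m21 B) (m21 A * m12 B + m22 A * m22 B).

Definition mapply (A : mat2) (v : vec2) : vec2 :=
  (m11 A * fst v + m12 A * snd v, m21 A * fst v + m22 A * snd v).

Definition mid : mat2 := Mat2 1 0 0 1.
Definition matS : mat2 := Mat2 0 (-1) 1 0.
Definition matSinv : mat2 := Mat2 0 1 (-1) 0.
Definition matT (q : nat) : mat2 := Mat2 1 (lam q) 0 1.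
Definition matTinv (q : nat) : mat2 := Mat2 1 (- lam q) 0 1.

Definition cols (u0 u1 : vec2) : mat2 := Mat2 (fst u0) (fst u1) (snd u0) (snd u1).

Inductive Gq (q : nat) : mat2 -> Prop :=
| Gq_id : Gq q mid
| Gq_S : forall A, Gq q A -> Gq q (mmul matS A)
| Gq_Sinv : forall A, Gq q A -> Gq q (mmul matSinv A)
| Gq_T : forall A, Gq q A -> Gq q (mmul (matT q) A)
| Gq_Tinv : forall A, Gq q A -> Gq q (mmul (matTinv q) A).

Definition orbit (q : nat) (u : vec2) (v : vec2) : Prop :=
  exists A, Gq q A /\ v = mapply A u.

Definition Lambda (q : nat) (v : vec2) : Prop := orbit q (1, 0) v.

Definition discrete (P : vec2 -> Prop) : Prop :=
  forall v, P v -> exists eps, 0 < eps /\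
    forall w, P w ->
      (fst w - fst v) ^ 2 + (snd w - snd v) ^ 2 < eps ^ 2 -> w = v.

Definition scale (a : R) (v : vec2) : vec2 := (a * fst v, a * snd v).

Definition Qq (q : nat) (v : vec2) : R :=
  fst v ^ 2 - lam q * fst v * snd v + snd v ^ 2.

Definition wedge (u0 u1 : vec2) : R := fst u0 * snd u1 - fst u1 * snd u0.

Definition matU (q : nat) : mat2 := mmul (matT q) matS.
Fixpoint mpow (A : mat2) (n : nat) : mat2 :=
  match n with O => mid | S k => mmul A (mpow A k) end.
Definition w (q i : nat) : vec2 := mapply (mpow (matU q) i) (1, 0).

(* Main.v *)
Require Import Defs.
From Stdlib Require Import Reals Lra Lia ZArith Classical.
Open Scope R_scope.

Lemma near_int t : exists k : Z, Rabs (t - IZR k) <= 1 / 2.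
Proof.
  destruct (archimed t) as [H1 H2].
  destruct (Rle_dec (t - IZR (up t - 1)) (1/2)).
  - exists (up t - 1)%Z. rewrite minus_IZR in *. rewrite Rabs_right by lra. lra.
  - exists (up t). rewrite minus_IZR in n. rewrite Rabs_left by lra. lra.
Qed.


Lemma sq_pos x : x <> 0 -> 0 < x ^ 2.
Proof. intro H. pose proof (Rsqr_pos_lt x H). unfold Rsqr in H0. simpl. lra. Qed.

Lemma geo_one a1 b1 a2 b2 vx vy eps px py :
  a1 * b2 - a2 * b1 = 1 -> px = vx * a1 + vy * a2 -> py = vx * b1 + vy * b2 ->
  0 < eps -> 0 < px ^ 2 + py ^ 2 ->
  4 * vx ^ 2 * vy ^ 2 < eps * (px ^ 2 + py ^ 2) ->
  px ^ 2 + py ^ 2 <= 4 * vx ^ 2 * (a1 ^ 2 + b1 ^ 2) ->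
  exists t, (t * a1 - px) ^ 2 + (t * b1 - py) ^ 2 < eps.
Proof.
  intros Hd Hpx Hpy He Hn Hs Hc.
  set (n1 := a1 ^ 2 + b1 ^ 2). fold n1 in Hc.
  assert (Hn1 : 0 < n1).
  { unfold n1. destruct (Req_dec a1 0); destruct (Req_dec b1 0).
    - subst. lra.
    - assert (0 < b1^2) by (apply sq_pos; auto). nra.
    - assert (0 < a1^2) by (apply sq_pos; auto). nra.
    - assert (0 < b1^2) by (apply sq_pos; auto). nra. }
  exists ((a1 * px + b1 * py) / n1).
  replace ((((a1 * px + b1 * py) / n1) * a1 - px) ^ 2 + (((a1 * px + b1 * py) / n1) * b1 - py) ^ 2)
    with ((a1 * py - b1 * px) ^ 2 / n1) by (unfold n1 in *; field; lra).
  replace (a1 * py - b1 * px) with vy by (rewrite Hpx, Hpy; transitivity (vy * (a1 * b2 - a2 * b1)); [rewrite Hd; ring | ring]).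
  apply (Rmult_lt_reg_r n1); auto. unfold Rdiv. rewrite Rmult_assoc, Rinv_l, Rmult_1_r by lra.
  assert (Hvx : 0 < vx ^ 2).
  { destruct (Req_dec vx 0). subst. lra. apply sq_pos; auto. }
  apply (Rmult_lt_reg_l (4 * vx ^ 2)); [lra|].
  apply Rlt_le_trans with (eps * (px ^ 2 + py ^ 2)); [lra|].
  nra.
Qed.

Lemma geo a1 b1 a2 b2 vx vy eps px py :
  a1 * b2 - a2 * b1 = 1 -> px = vx * a1 + vy * a2 -> py = vx * b1 + vy * b2 ->
  0 < eps -> 0 < px ^ 2 + py ^ 2 ->
  Rabs vx < Rmin 1 (eps * (px ^ 2 + py ^ 2) / 8) ->
  Rabs vy < Rmin 1 (eps * (px ^ 2 + py ^ 2) / 8) ->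
  (exists t, (t * a1 - px) ^ 2 + (t * b1 - py) ^ 2 < eps) \/
  (exists t, (t * a2 - px) ^ 2 + (t * b2 - py) ^ 2 < eps).
Proof.
  intros Hd Hpx Hpy He Hn Hx Hy.
  set (n2 := px ^ 2 + py ^ 2) in *. set (d := Rmin 1 (eps * n2 / 8)) in *.
  assert (Hd1 : d <= 1) by apply Rmin_l.
  assert (Hd2 : d <= eps * n2 / 8) by apply Rmin_r.
  pose proof (Rabs_pos vx). pose proof (Rabs_pos vy).
  assert (Hx2 : vx ^ 2 <= d ^ 2).
  { rewrite <- (pow2_abs vx). apply pow_incr. lra. }
  assert (Hy2 : vy ^ 2 <= d ^ 2).
  { rewrite <- (pow2_abs vy). apply pow_incr. lra. }
  assert (Hdpos : 0 < d) by lra.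
  assert (H4 : 4 * vx ^ 2 * vy ^ 2 < eps * n2).
  { assert (vx ^ 2 * vy ^ 2 <= d ^ 2 * d ^ 2).
    { apply Rmult_le_compat; auto; apply pow2_ge_0. }
    assert (d ^ 2 <= d) by (simpl; nra). assert (d ^ 2 <= 1) by lra. assert (d ^ 2 * d ^ 2 <= d) by (pose proof (pow2_ge_0 d); nra). lra. }
  assert (Hc : n2 <= 2 * (vx ^ 2 * (a1 ^ 2 + b1 ^ 2) + vy ^ 2 * (a2 ^ 2 + b2 ^ 2))).
  { unfold n2. rewrite Hpx, Hpy.
    pose proof (pow2_ge_0 (vx * a1 - vy * a2)). pose proof (pow2_ge_0 (vx * b1 - vy * b2)). nra. }
  destruct (Rle_dec n2 (4 * vx ^ 2 * (a1 ^ 2 + b1 ^ 2))).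
  - left. apply (geo_one a1 b1 a2 b2 vx vy); auto.
  - right. apply (geo_one a2 b2 (- a1) (- b1) vy (- vx)).
    + rewrite <- Hd; ring.
    + rewrite Hpx; ring.
    + rewrite Hpy; ring.
    + exact He.
    + exact Hn.
    + fold n2. replace ((- vx) ^ 2) with (vx ^ 2) by ring. lra.
    + fold n2. lra.
Qed.

Section Q.
Variable q : nat.
Hypothesis hq : (3 <= q)%nat.

Let th := PI / INR q.

Lemma INRq_pos : 3 <= INR q.
Proof. replace 3 with (INR 3) by (simpl; ring). apply le_INR; lia. Qed.

Lemma th_pos : 0 < th.
Proof. unfold th. pose proof INRq_pos. pose proof PI_RGT_0. apply Rdiv_lt_0_compat; lra. Qed.

Lemma th_le : th <= PI / 3.
Proof. unfold th. pose proof INRq_pos. pose proof PI_RGT_0.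
  apply Rmult_le_compat_l; [lra|]. apply Rinv_le_contravar; lra. Qed.

Lemma lam_pos : 0 < lam q.
Proof. unfold lam. fold th. pose proof th_pos. pose proof th_le. pose proof PI_RGT_0.
  assert (0 < cos th) by (apply cos_gt_0; lra). lra. Qed.

Lemma lam_lt2 : lam q < 2.
Proof. unfold lam. fold th. pose proof th_pos. pose proof th_le. pose proof PI_RGT_0.
  assert (cos th < cos 0) by (apply cos_decreasing_1; lra). rewrite cos_0 in H2. lra. Qed.

Lemma sin_th_pos : 0 < sin th.
Proof. pose proof th_pos. pose proof th_le. pose proof PI_RGT_0. apply sin_gt_0; lra. Qed.

Fixpoint aseq (n : nat) : R :=
  match n with
  | O => 0
  | S m => match m with O => 1 | S k => lam q * aseq m - aseq k end
  end.

Lemma aseq_SS n : aseq (S (S n)) = lam q * aseq (S n) - aseq n.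
Proof. reflexivity. Qed.

Lemma aseq_sin n : aseq n * sin th = sin (INR n * th).
Proof.
  assert (H : forall n, aseq n * sin th = sin (INR n * th) /\
                        aseq (S n) * sin th = sin (INR (S n) * th)).
  { induction n0 as [|n0 [IH1 IH2]].
    - simpl. split; [rewrite Rmult_0_l, Rmult_0_l, sin_0; ring | rewrite Rmult_1_l, Rmult_1_l; ring].
    - split; [exact IH2|]. rewrite aseq_SS.
      replace (INR (S (S n0)) * th) with (INR (S n0) * th + th)
        by (rewrite (S_INR (S n0)); ring).
      replace ((lam q * aseq (S n0) - aseq n0) * sin th) with
        (lam q * (aseq (S n0) * sin th) - aseq n0 * sin th) by ring.
      rewrite IH1, IH2. unfold lam. fold th.
      replace (INR n0 * th) with (INR (S n0) * th - th) by (rewrite S_INR; ring).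
      rewrite sin_plus, sin_minus. ring. }
  apply H.
Qed.

Lemma aseq_nonneg n : (n <= q)%nat -> 0 <= aseq n.
Proof.
  intro Hn. pose proof sin_th_pos. pose proof (aseq_sin n).
  assert (0 <= sin (INR n * th)).
  { apply sin_ge_0. pose proof (pos_INR n). pose proof th_pos. nra.
    unfold th. apply le_INR in Hn. pose proof INRq_pos. pose proof PI_RGT_0.
    unfold Rdiv. replace PI with (INR q * (PI * / INR q)) at 2 by (field; lra).
    apply Rmult_le_compat_r; [|lra]. apply Rmult_le_pos; [lra|]. left; apply Rinv_0_lt_compat; lra. }
  nra.
Qed.

Lemma aseq_q : aseq q = 0.
Proof.
  pose proof sin_th_pos. pose proof (aseq_sin q). pose proof INRq_pos.
  replace (INR q * th) with PI in H0 by (unfold th; field; lra).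
  rewrite sin_PI in H0. nra.
Qed.

Lemma aseq_qm1 : aseq (q - 1) = 1.
Proof.
  pose proof sin_th_pos. pose proof (aseq_sin (q-1)). pose proof INRq_pos.
  replace (INR (q - 1) * th) with (PI - th) in H0.
  - rewrite sin_PI_x in H0. nra.
  - rewrite minus_INR by lia. unfold th. simpl. field. lra.
Qed.

Lemma aseq_qp1 : aseq (S q) = -1.
Proof.
  assert (E : q = S (S (q - 2))) by lia.
  pose proof aseq_q as A0. pose proof aseq_qm1 as A1.
  replace (q - 1)%nat with (S (q - 2)) in A1 by lia.
  rewrite E in A0 |- *. rewrite aseq_SS, A0, A1. ring.
Qed.

Lemma cassini n : aseq (S n) * aseq (S n) - aseq (S (S n)) * aseq n = 1.
Proof.
  induction n as [|n IH].
  - simpl. ring.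
  - rewrite (aseq_SS (S n)). rewrite <- IH. rewrite aseq_SS. ring.
Qed.


Definition Sv (v : vec2) : vec2 := (- snd v, fst v).
Definition neg (v : vec2) : vec2 := (- fst v, - snd v).
Definition Uv (v : vec2) : vec2 := (lam q * fst v - snd v, fst v).
Definition iterU (n : nat) (v : vec2) : vec2 := Nat.iter n Uv v.

Lemma iterU_S n x y : iterU (S n) (x, y) =
  (aseq (S (S n)) * x - aseq (S n) * y, aseq (S n) * x - aseq n * y).
Proof.
  induction n as [|n IH].
  - change (iterU 1 (x,y)) with (lam q * x - y, x). rewrite (aseq_SS 0). change (aseq 1) with 1. change (aseq 0) with 0. f_equal; ring.
  - change (iterU (S (S n)) (x, y)) with (Uv (iterU (S n) (x, y))).
    rewrite IH. unfold Uv; cbn [fst snd]. rewrite (aseq_SS (S n)).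
    f_equal; try ring; rewrite (aseq_SS n); ring.
Qed.

Lemma iterU_q v : iterU q v = neg v.
Proof.
  destruct v as [x y]. replace q with (S (q - 1)) at 1 by lia.
  rewrite iterU_S. replace (S (S (q - 1))) with (S q) by lia.
  replace (S (q - 1)) with q by lia.
  rewrite aseq_qp1, aseq_q, aseq_qm1. unfold neg; simpl. f_equal; ring.
Qed.

Lemma Q_U v : Qq q (Uv v) = Qq q v.
Proof. destruct v as [x y]; unfold Qq, Uv; simpl. ring. Qed.

Lemma Q_iterU n v : Qq q (iterU n v) = Qq q v.
Proof. induction n; [reflexivity|]. change (iterU (S n) v) with (Uv (iterU n v)).
  rewrite Q_U; auto. Qed.

Lemma Q_Sv v : Qq q (Sv v) = Qq q v + 2 * lam q * fst v * snd v.
Proof. destruct v as [x y]; unfold Qq, Sv; simpl. ring. Qed.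

Lemma Q_neg v : Qq q (neg v) = Qq q v.
Proof. destruct v as [x y]; unfold Qq, neg; simpl. ring. Qed.

Lemma Uv_neg v : Uv (neg v) = neg (Uv v).
Proof. destruct v as [x y]; unfold Uv, neg; simpl. f_equal; ring. Qed.

Lemma iterU_neg n v : iterU n (neg v) = neg (iterU n v).
Proof. induction n; [reflexivity|]. change (iterU (S n) (neg v)) with (Uv (iterU n (neg v))).
  rewrite IHn, Uv_neg. reflexivity. Qed.

Lemma neg_neg v : neg (neg v) = v.
Proof. destruct v as [x y]; unfold neg; simpl. f_equal; ring. Qed.

Lemma Sv_neg v : Sv (neg v) = neg (Sv v).
Proof. destruct v as [x y]; unfold Sv, neg; simpl. f_equal; ring. Qed.

Lemma Sv_Sv v : Sv (Sv v) = neg v.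
Proof. destruct v as [x y]; unfold Sv, neg; simpl. f_equal; ring. Qed.

Lemma cone k v : (1 <= k <= q - 1)%nat -> fst v * snd v <= 0 ->
  0 <= fst (iterU k v) * snd (iterU k v).
Proof.
  intros Hk Hv. destruct k as [|m]; [lia|]. destruct v as [x y]. rewrite iterU_S.
  cbn [fst snd] in *.
  pose proof (aseq_nonneg (S (S m)) ltac:(lia)).
  pose proof (aseq_nonneg (S m) ltac:(lia)).
  pose proof (aseq_nonneg m ltac:(lia)).
  assert (HC : (0 <= x /\ y <= 0) \/ (x <= 0 /\ 0 <= y)).
  { destruct (Rtotal_order x 0) as [Hx|[Hx|Hx]].
    - right. split; [lra|]. nra.
    - subst. destruct (Rle_dec y 0); [left|right]; lra.
    - left. split; [lra|]. nra. }
  destruct HC as [[Hx Hy]|[Hx Hy]].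
  - assert (0 <= aseq (S (S m)) * x - aseq (S m) * y) by nra.
    assert (0 <= aseq (S m) * x - aseq m * y) by nra. nra.
  - assert (aseq (S (S m)) * x - aseq (S m) * y <= 0) by nra.
    assert (aseq (S m) * x - aseq m * y <= 0) by nra. nra.
Qed.

Inductive Y : vec2 -> Prop :=
| Y_w k : (k <= q - 1)%nat -> Y (iterU k (1, 0))
| Y_step k v : (1 <= k <= q - 1)%nat -> Y v -> Y (iterU k (Sv v)).

Lemma Y_good v : Y v -> 0 <= fst v * snd v /\ 1 <= Qq q v.
Proof.
  induction 1 as [k Hk | k v Hk _ [IH1 IH2]].
  - rewrite Q_iterU. split.
    + destruct k as [|m]; [simpl; lra|]. rewrite iterU_S. cbn [fst snd].
      pose proof (aseq_nonneg (S (S m)) ltac:(lia)).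
      pose proof (aseq_nonneg (S m) ltac:(lia)). nra.
    + unfold Qq; simpl; lra.
  - split.
    + apply cone; auto. destruct v as [x y]; unfold Sv; simpl in *. nra.
    + rewrite Q_iterU, Q_Sv. pose proof lam_pos. nra.
Qed.

Definition X (v : vec2) : Prop :=
  exists y, Y y /\ (v = y \/ v = neg y \/ v = Sv y \/ v = neg (Sv y)).

Lemma X_good v : X v -> 1 <= Qq q v /\ 1 <= Qq q (Sv v).
Proof.
  intros [y [Hy Hv]]. destruct (Y_good y Hy) as [H1 H2]. pose proof lam_pos.
  pose proof (Q_Sv y).
  destruct Hv as [Hv|[Hv|[Hv|Hv]]]; subst v.
  - nra.
  - rewrite Sv_neg, !Q_neg. nra.
  - rewrite Sv_Sv, Q_neg. nra.
  - rewrite Sv_neg, Sv_Sv, !Q_neg. nra.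
Qed.

Lemma X_neg v : X v -> X (neg v).
Proof.
  intros [y [Hy Hv]]. exists y; split; auto.
  destruct Hv as [Hv|[Hv|[Hv|Hv]]]; subst v; rewrite ?neg_neg; tauto.
Qed.

Lemma X_Sv v : X v -> X (Sv v).
Proof.
  intros [y [Hy Hv]]. exists y; split; auto.
  destruct Hv as [Hv|[Hv|[Hv|Hv]]]; subst v; rewrite ?Sv_neg, ?Sv_Sv, ?neg_neg; tauto.
Qed.

Lemma X_Y v : Y v -> X v.
Proof. intro. exists v; tauto. Qed.

Lemma Y_Uv v : Y v -> X (Uv v).
Proof.
  intro H. destruct H as [k Hk | k v Hk Hv].
  - change (Uv (iterU k (1,0))) with (iterU (S k) (1,0)).
    destruct (Nat.eq_dec k (q - 1)) as [E|E].
    + replace (S k) with q by lia. rewrite iterU_q. apply X_neg, X_Y.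
      apply (Y_w 0). lia.
    + apply X_Y, Y_w. lia.
  - change (Uv (iterU k (Sv v))) with (iterU (S k) (Sv v)).
    destruct (Nat.eq_dec k (q - 1)) as [E|E].
    + replace (S k) with q by lia. rewrite iterU_q. apply X_neg, X_Sv, X_Y; auto.
    + apply X_Y, Y_step; auto. lia.
Qed.

Lemma X_Uv v : X v -> X (Uv v).
Proof.
  intros [y [Hy Hv]].
  destruct Hv as [Hv|[Hv|[Hv|Hv]]]; subst v.
  - apply Y_Uv; auto.
  - rewrite Uv_neg. apply X_neg, Y_Uv; auto.
  - apply X_Y. apply (Y_step 1); auto. lia.
  - rewrite Uv_neg. apply X_neg, X_Y. apply (Y_step 1); auto. lia.
Qed.

Lemma X_iterU n v : X v -> X (iterU n v).
Proof. induction n; intro H; [exact H|]. apply X_Uv. auto. Qed.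


Lemma mapply_mmul A B v : mapply (mmul A B) v = mapply A (mapply B v).
Proof. destruct A, B, v; unfold mapply, mmul; simpl. f_equal; ring. Qed.

Lemma mapply_S v : mapply matS v = Sv v.
Proof. destruct v; unfold mapply, matS, Sv; simpl. f_equal; ring. Qed.
Lemma mapply_Sinv v : mapply matSinv v = neg (Sv v).
Proof. destruct v; unfold mapply, matSinv, Sv, neg; simpl. f_equal; ring. Qed.
Lemma mapply_T v : mapply (matT q) v = Uv (neg (Sv v)).
Proof. destruct v; unfold mapply, matT, Uv, Sv, neg; simpl. f_equal; ring. Qed.
Lemma mapply_Tinv v : mapply (matTinv q) v = Sv (neg (iterU (q - 1) v)).
Proof.
  assert (H : Uv (iterU (q - 1) v) = neg v).
  { rewrite <- iterU_q. replace q with (S (q - 1)) at 2 by lia. reflexivity. }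
  destruct (iterU (q - 1) v) as [a b]. destruct v as [x y].
  unfold Uv, neg in H; simpl in H. injection H as H1 H2.
  unfold mapply, matTinv, Sv, neg; simpl. f_equal; [subst a; lra | lra].
Qed.

Lemma Lambda_X v : Lambda q v -> X v.
Proof.
  intros [A [HA ->]]. induction HA.
  - apply X_Y. replace (mapply mid (1,0)) with (iterU 0 (1,0)).
    + apply Y_w. lia.
    + unfold mapply, mid; simpl. f_equal; ring.
  - rewrite mapply_mmul, mapply_S. apply X_Sv; auto.
  - rewrite mapply_mmul, mapply_Sinv. apply X_neg, X_Sv; auto.
  - rewrite mapply_mmul, mapply_T. apply X_Uv, X_neg, X_Sv; auto.
  - rewrite mapply_mmul, mapply_Tinv. apply X_Sv, X_neg, X_iterU; auto.
Qed.

Lemma Lambda_Q v : Lambda q v -> 1 <= Qq q v /\ 1 <= Qq q (Sv v).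
Proof. intro H. apply X_good, Lambda_X, H. Qed.

Lemma mmul_assoc A B C : mmul (mmul A B) C = mmul A (mmul B C).
Proof. destruct A, B, C; unfold mmul; simpl. f_equal; ring. Qed.

Lemma mmul_id_l A : mmul mid A = A.
Proof. destruct A; unfold mmul, mid; simpl. f_equal; ring. Qed.

Lemma Gq_mul A B : Gq q A -> Gq q B -> Gq q (mmul A B).
Proof.
  intros HA HB. induction HA.
  - rewrite mmul_id_l; auto.
  - rewrite mmul_assoc. constructor; auto.
  - rewrite mmul_assoc. constructor; auto.
  - rewrite mmul_assoc. constructor; auto.
  - rewrite mmul_assoc. constructor; auto.
Qed.

Lemma Gq_gen_S : Gq q matS.
Proof. rewrite <- (mmul_id_l matS). replace (mmul mid matS) with (mmul matS mid).
  constructor; constructor. destruct matS eqn:E; unfold mmul, mid; simpl. f_equal; ring. Qed.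

Definition minv (A : mat2) : mat2 := Mat2 (m22 A) (- m12 A) (- m21 A) (m11 A).
Definition det (A : mat2) : R := m11 A * m22 A - m12 A * m21 A.

Lemma minv_mmul A B : minv (mmul A B) = mmul (minv B) (minv A).
Proof. destruct A, B; unfold minv, mmul; simpl. f_equal; ring. Qed.

Lemma mmul_id_r A : mmul A mid = A.
Proof. destruct A; unfold mmul, mid; simpl. f_equal; ring. Qed.

Lemma Gq_gen A : A = matS \/ A = matSinv \/ A = matT q \/ A = matTinv q -> Gq q A.
Proof.
  intros H. rewrite <- (mmul_id_r A).
  destruct H as [H|[H|[H|H]]]; subst A; constructor; constructor.
Qed.

Lemma Gq_minv A : Gq q A -> Gq q (minv A).
Proof.
  induction 1.
  - replace (minv mid) with mid by (unfold minv, mid; simpl; f_equal; ring). constructor.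
  - rewrite minv_mmul. apply Gq_mul; auto. apply Gq_gen.
    right; left. unfold minv, matS, matSinv; simpl. f_equal; ring.
  - rewrite minv_mmul. apply Gq_mul; auto. apply Gq_gen.
    left. unfold minv, matS, matSinv; simpl. f_equal; ring.
  - rewrite minv_mmul. apply Gq_mul; auto. apply Gq_gen.
    right; right; right. unfold minv, matT, matTinv; simpl. f_equal; ring.
  - rewrite minv_mmul. apply Gq_mul; auto. apply Gq_gen.
    right; right; left. unfold minv, matT, matTinv; simpl. f_equal; ring.
Qed.

Lemma det_mmul A B : det (mmul A B) = det A * det B.
Proof. destruct A, B; unfold det, mmul; simpl. ring. Qed.

Lemma Gq_det A : Gq q A -> det A = 1.
Proof.
  induction 1; try (rewrite det_mmul, IHGq; unfold det; simpl; ring).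
  unfold det, mid; simpl; ring.
Qed.

Lemma minv_l A v : det A = 1 -> mapply (minv A) (mapply A v) = v.
Proof.
  intro H. destruct A as [a b c d], v as [x y]. unfold det in H; simpl in H.
  unfold mapply, minv; simpl. f_equal.
  - transitivity ((a * d - b * c) * x); [ring | rewrite H; ring].
  - transitivity ((a * d - b * c) * y); [ring | rewrite H; ring].
Qed.

Lemma minv_r A v : det A = 1 -> mapply A (mapply (minv A) v) = v.
Proof.
  intro H. destruct A as [a b c d], v as [x y]. unfold det in H; simpl in H.
  unfold mapply, minv; simpl. f_equal.
  - transitivity ((a * d - b * c) * x); [ring | rewrite H; ring].
  - transitivity ((a * d - b * c) * y); [ring | rewrite H; ring].
Qed.

Lemma Lambda_mul B v : Gq q B -> Lambda q v -> Lambda q (mapply B v).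
Proof.
  intros HB [A [HA ->]]. exists (mmul B A). split; [apply Gq_mul; auto|].
  rewrite mapply_mmul; reflexivity.
Qed.


Definition Tz (k : Z) : mat2 := Mat2 1 (IZR k * lam q) 0 1.

Lemma Gq_Tz k : Gq q (Tz k).
Proof.
  induction k using Z.peano_ind.
  - replace (Tz 0) with mid by (unfold Tz, mid; f_equal; ring). constructor.
  - replace (Tz (Z.succ k)) with (mmul (matT q) (Tz k)).
    + constructor; auto.
    + unfold Tz, mmul, matT; simpl. rewrite succ_IZR. f_equal; ring.
  - replace (Tz (Z.pred k)) with (mmul (matTinv q) (Tz k)).
    + constructor; auto.
    + unfold Tz, mmul, matTinv; simpl. rewrite <- Z.sub_1_r, minus_IZR. f_equal; ring.
Qed.

Lemma mapply_Tz k v : mapply (Tz k) v = (fst v + IZR k * lam q * snd v, snd v).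
Proof. destruct v; unfold mapply, Tz; simpl. f_equal; ring. Qed.

Lemma cols_eq A u0 u1 : det A = 1 -> mapply A u0 = (1, 0) -> mapply A u1 = (0, 1) ->
  cols u0 u1 = minv A.
Proof.
  intros H H0 H1.
  rewrite <- (minv_l A u0 H), <- (minv_l A u1 H), H0, H1.
  destruct A; unfold cols, minv, mapply; simpl. f_equal; ring.
Qed.

Lemma part4 u0 u1 : Lambda q u0 -> Lambda q u1 -> wedge u0 u1 = 1 ->
     (exists A, Gq q A /\ mapply A u0 = (1, 0) /\ mapply A u1 = (0, 1))
     /\ Gq q (cols u0 u1).
Proof.
  intros [B [HB Hu0]] Hu1 Hw.
  pose proof (Gq_det B HB) as HdB.
  set (v := mapply (minv B) u1).
  assert (Hv : Lambda q v) by (apply Lambda_mul; auto; apply Gq_minv; auto).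
  assert (Hsv : snd v = 1).
  { rewrite <- Hw. subst v. rewrite Hu0. destruct B, u1; unfold mapply, minv, wedge; simpl. ring. }
  pose proof lam_pos as Hl.
  destruct (near_int (fst v / lam q)) as [k Hk].
  set (x' := fst v - IZR k * lam q).
  assert (Hx' : Rabs x' <= lam q / 2).
  { replace x' with (lam q * (fst v / lam q - IZR k)) by (unfold x'; field; lra).
    rewrite Rabs_mult, Rabs_right by lra. pose proof (Rabs_pos (fst v / lam q - IZR k)). nra. }
  set (w0 := mapply (Tz (- k)) v).
  assert (Hw0 : w0 = (x', 1)).
  { unfold w0. rewrite mapply_Tz, Hsv, opp_IZR. unfold x'. f_equal; ring. }
  assert (HLw : Lambda q w0) by (apply Lambda_mul; auto; apply Gq_Tz).
  destruct (Lambda_Q w0 HLw) as [Q1 Q2]. rewrite Hw0 in Q1, Q2.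
  unfold Qq, Sv in Q1, Q2; simpl in Q1, Q2.
  assert (Hx0 : x' = 0).
  { destruct (Rle_dec 0 x').
    - rewrite Rabs_right in Hx' by lra. nra.
    - rewrite Rabs_left in Hx' by lra. nra. }
  set (A := mmul (Tz (- k)) (minv B)).
  assert (HA : Gq q A) by (apply Gq_mul; [apply Gq_Tz | apply Gq_minv; auto]).
  assert (A0 : mapply A u0 = (1, 0)).
  { unfold A. rewrite mapply_mmul, Hu0, minv_l by auto. rewrite mapply_Tz. simpl. f_equal; ring. }
  assert (A1 : mapply A u1 = (0, 1)).
  { unfold A. rewrite mapply_mmul. fold v. fold w0. rewrite Hw0, Hx0. reflexivity. }
  split.
  - exists A; auto.
  - rewrite (cols_eq A u0 u1 (Gq_det A HA) A0 A1). apply Gq_minv; auto.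
Qed.

Lemma mapply_U v : mapply (matU q) v = Uv v.
Proof. destruct v; unfold mapply, matU, mmul, matT, matS, Uv; simpl. f_equal; ring. Qed.

Lemma w_formula i : w q i = (aseq (S i), aseq i).
Proof.
  induction i as [|i IH].
  - unfold w, mapply, mpow, mid; simpl. f_equal; ring.
  - unfold w. simpl mpow. rewrite mapply_mmul. fold (w q i). rewrite IH, mapply_U.
    unfold Uv; cbn [fst snd]. rewrite (aseq_SS i). reflexivity.
Qed.

Lemma part3 : (forall i : nat, (i <= q - 2)%nat -> wedge (w q i) (w q (i + 1)) = 1)
   /\ wedge (w q 0) (w q (q - 1)) = 1.
Proof.
  split.
  - intros i _. rewrite !w_formula. replace (S (i + 1)) with (S (S i)) by lia.
    replace (i + 1)%nat with (S i) by lia. unfold wedge; cbn [fst snd].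
    apply cassini.
  - rewrite !w_formula. replace (S (q - 1)) with q by lia. unfold wedge; cbn [fst snd].
    rewrite aseq_q, aseq_qm1. change (aseq 1) with 1. change (aseq 0) with 0. ring.
Qed.

Lemma part2 v : Lambda q v -> ~ (Qq q v < 1).
Proof. intros H. destruct (Lambda_Q v H). lra. Qed.


Lemma orbit_mul u v B : Gq q B -> orbit q u v -> orbit q u (mapply B v).
Proof. intros HB [A [HA ->]]. exists (mmul B A). split; [apply Gq_mul; auto | rewrite mapply_mmul; auto]. Qed.

Lemma Gq_mid : Gq q mid.
Proof. constructor. Qed.

Lemma mapply_mid v : mapply mid v = v.
Proof. destruct v; unfold mapply, mid; simpl. f_equal; ring. Qed.

Lemma orbit_self u : orbit q u u.
Proof. exists mid. split; [constructor | rewrite mapply_mid; auto]. Qed.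

Definition cusp u := exists B a, Gq q B /\ mapply B u = (a, 0).
Definition small u := forall eps, 0 < eps -> exists v, orbit q u v /\ snd v <> 0 /\
   Rabs (fst v) < eps /\ Rabs (snd v) < eps.

Lemma reduction u : cusp u \/ small u.
Proof.
  destruct (classic (cusp u)) as [Hc|Hc]; [left; auto | right].
  pose proof lam_pos as Hl. pose proof lam_lt2 as Hl2.
  set (r := lam q / 2).
  assert (Hr0 : 0 < r) by (unfold r; lra). assert (Hr1 : r < 1) by (unfold r; lra).
  set (M := (Rabs (fst u) + Rabs (snd u)) / r).
  assert (HM : 0 <= M) by (unfold M; pose proof (Rabs_pos (fst u)); pose proof (Rabs_pos (snd u));
     apply Rmult_le_pos; [lra | left; apply Rinv_0_lt_compat; lra]).
  assert (P : forall n, exists v, orbit q u v /\ snd v <> 0 /\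
             Rabs (fst v) <= r ^ n * M /\ Rabs (snd v) <= r ^ (S n) * M).
  { induction n as [|n IH].
    - exists u. split; [apply orbit_self|]. split; [|split].
      + intro H0. apply Hc. exists mid, (fst u). split; [constructor|].
        rewrite mapply_mid. destruct u; simpl in *; subst; auto.
      + simpl. unfold M. pose proof (Rabs_pos (fst u)); pose proof (Rabs_pos (snd u)).
        apply (Rmult_le_reg_l r); auto. field_simplify; [|lra]. nra.
      + simpl. unfold M. pose proof (Rabs_pos (fst u)); pose proof (Rabs_pos (snd u)).
        field_simplify; lra.
    - destruct IH as [v [Hv [Hy [Hfx Hfy]]]].
      destruct v as [x y]. simpl in Hy, Hfx, Hfy.
      destruct (near_int (- x / (lam q * y))) as [k Hk].
      set (z := x + IZR k * lam q * y).
      assert (Hz : Rabs z <= r * Rabs y).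
      { replace z with ((lam q * y) * (- (- x / (lam q * y) - IZR k))) by (unfold z; field; split; lra).
        rewrite Rabs_mult, Rabs_Ropp, Rabs_mult, (Rabs_right (lam q)) by lra.
        unfold r. pose proof (Rabs_pos y). pose proof (Rabs_pos (- x / (lam q * y) - IZR k)). assert (0 <= lam q * Rabs y) by nra. nra. }
      assert (Hw : orbit q u (mapply (Tz k) (x, y))) by (apply orbit_mul; auto; apply Gq_Tz).
      rewrite mapply_Tz in Hw. simpl in Hw. fold z in Hw.
      destruct (Req_dec z 0) as [Hz0|Hz0].
      + exfalso. apply Hc. destruct Hw as [A [HA HAu]].
        exists (mmul matSinv A), y. split.
        * apply Gq_mul; auto. apply Gq_gen. right; left; auto.
        * rewrite mapply_mmul, <- HAu, mapply_Sinv. unfold Sv, neg; simpl. rewrite Hz0. f_equal; ring.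
      + exists (mapply matS (z, y)). split; [apply orbit_mul; auto; apply Gq_gen; left; auto|].
        rewrite mapply_S. unfold Sv; simpl fst; simpl snd. split; [auto|]. split.
        * rewrite Rabs_Ropp. simpl in Hfy |- *. lra.
        * replace (r ^ S (S n) * M) with (r * (r ^ S n * M)) by (simpl; ring).
          apply Rle_trans with (r * Rabs y); auto. simpl. replace (r * (r * r ^ n) * M) with (r * (r * r ^ n * M)) by ring. apply Rmult_le_compat_l; lra. }
  intros eps Heps.
  destruct (pow_lt_1_zero r ltac:(rewrite Rabs_right; lra) (eps / (M + 1)) ltac:(apply Rdiv_lt_0_compat; lra))
    as [N HN].
  destruct (P N) as [v [Hv [Hy [Hfx Hfy]]]].
  exists v. split; auto. split; auto.
  pose proof (HN N (le_n N)) as H1. pose proof (HN (S N) (le_S _ _ (le_n N))) as H2.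
  rewrite Rabs_right in H1 by (apply Rle_ge, pow_le; lra).
  rewrite Rabs_right in H2 by (apply Rle_ge, pow_le; lra).
  assert (HeM : eps / (M + 1) * M < eps).
  { apply (Rmult_lt_reg_r (M + 1)); [lra|]. field_simplify; lra. }
  pose proof (pow_le r N ltac:(lra)). pose proof (pow_le r (S N) ltac:(lra)).
  split; nra.
Qed.


Lemma Lambda_e1 : Lambda q (1, 0).
Proof. exists mid. split; [constructor | rewrite mapply_mid; auto]. Qed.

Lemma approx_cusp p eps : 0 < eps -> exists c t, Lambda q c /\
   (t * fst c - fst p) ^ 2 + (t * snd c - snd p) ^ 2 < eps.
Proof.
  intro He. destruct p as [px py]. cbn [fst snd].
  pose proof (pow2_ge_0 px). pose proof (pow2_ge_0 py).
  destruct (Req_dec (px ^ 2 + py ^ 2) 0) as [Hz|Hz].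
  - exists (1, 0), 0. split; [apply Lambda_e1|]. cbn [fst snd].
    replace ((0 * 1 - px) ^ 2 + (0 * 0 - py) ^ 2) with (px ^ 2 + py ^ 2) by ring. lra.
  - assert (Hn : 0 < px ^ 2 + py ^ 2) by lra.
    destruct (reduction (px, py)) as [[B [a [HB Ha]]] | Hs].
    + pose proof (Gq_det B HB) as HdB.
      assert (Hp : (px, py) = mapply (minv B) (a, 0)) by (rewrite <- Ha, minv_l; auto).
      exists (mapply (minv B) (1, 0)), a. split.
      * exists (minv B). split; auto. apply Gq_minv; auto.
      * destruct B as [b11 b12 b21 b22]. unfold mapply, minv in Hp |- *; simpl in Hp |- *.
        injection Hp as Hp1 Hp2. rewrite Hp1, Hp2.
        replace ((a * (b22 * 1 + - b12 * 0) - (b22 * a + - b12 * 0)) ^ 2 +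
                 (a * (- b21 * 1 + b11 * 0) - (- b21 * a + b11 * 0)) ^ 2) with 0 by ring. lra.
    + assert (Hd : 0 < Rmin 1 (eps * (px ^ 2 + py ^ 2) / 8)).
      { apply Rmin_glb_lt; [lra|]. apply Rmult_lt_0_compat; [apply Rmult_lt_0_compat|]; lra. }
      destruct (Hs _ Hd) as [v [[A [HA Hv]] [_ [Hvx Hvy]]]].
      pose proof (Gq_det A HA) as HdA.
      assert (Hp : (px, py) = mapply (minv A) v) by (rewrite Hv, minv_l; auto).
      destruct A as [a b c d]. unfold det in HdA; simpl in HdA.
      destruct v as [vx vy]. unfold mapply, minv in Hp; simpl in Hp. injection Hp as Hp1 Hp2.
      cbn [fst snd] in Hvx, Hvy.
      destruct (geo d (- c) (- b) a vx vy eps px py) as [[t Ht]|[t Ht]];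
        try (rewrite ?Hp1, ?Hp2; ring); auto.
      * lra.
      * exists (d, - c), t. split; auto.
        exists (minv (Mat2 a b c d)). split; [apply Gq_minv; auto|].
        unfold mapply, minv; simpl. f_equal; ring.
      * exists (- b, a), t. split; auto.
        exists (mmul (minv (Mat2 a b c d)) matS). split.
        -- apply Gq_mul; [apply Gq_minv; auto | apply Gq_gen; left; auto].
        -- unfold mapply, minv, mmul, matS; simpl. f_equal; ring.
Qed.


Lemma cauchy2 a b x y : (a * x + b * y) ^ 2 <= (a ^ 2 + b ^ 2) * (x ^ 2 + y ^ 2).
Proof. pose proof (pow2_ge_0 (a * y - b * x)). nra. Qed.

Lemma sum_sq2 x y : (x + y) ^ 2 <= 2 * x ^ 2 + 2 * y ^ 2.
Proof. pose proof (pow2_ge_0 (x - y)). nra. Qed.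

Lemma dense u : small u -> forall p eps, 0 < eps -> exists v, orbit q u v /\
  (fst v - fst p) ^ 2 + (snd v - snd p) ^ 2 < eps.
Proof.
  intros Hs p eps He.
  destruct (approx_cusp p (eps / 4) ltac:(lra)) as [c [t [[C [HC Hc]] Hct]]].
  destruct C as [a b cc d]. subst c. unfold mapply in Hct; cbn [fst snd m11 m12 m21 m22] in Hct.
  set (K := a ^ 2 + b ^ 2 + cc ^ 2 + d ^ 2).
  assert (HK : 0 <= K) by (unfold K; pose proof (pow2_ge_0 a); pose proof (pow2_ge_0 b);
     pose proof (pow2_ge_0 cc); pose proof (pow2_ge_0 d); lra).
  set (eta := eps / (4 * (K + 1))).
  assert (Heta : 0 < eta) by (unfold eta; apply Rdiv_lt_0_compat; lra).
  assert (HKeta : K * eta < eps / 4).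
  { unfold eta. apply (Rmult_lt_reg_r (4 * (K + 1))); [lra|]. field_simplify; lra. }
  set (dl := Rmin 1 (eta / 4)).
  assert (Hdl : 0 < dl) by (apply Rmin_glb_lt; lra).
  assert (Hdl1 : dl <= 1) by apply Rmin_l. assert (Hdl2 : dl <= eta / 4) by apply Rmin_r.
  destruct (Hs dl Hdl) as [[x y] [Hsv [Hy [Hx Hyb]]]]. cbn [fst snd] in Hy, Hx, Hyb.
  pose proof lam_pos as Hl. pose proof lam_lt2 as Hl2.
  destruct (near_int ((t - x) / (lam q * y))) as [m Hm].
  set (d1 := x + IZR m * lam q * y - t).
  assert (Hd1 : Rabs d1 <= Rabs y).
  { replace d1 with ((lam q * y) * (- ((t - x) / (lam q * y) - IZR m))) by (unfold d1; field; split; lra).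
    rewrite Rabs_mult, Rabs_Ropp, Rabs_mult, (Rabs_right (lam q)) by lra.
    pose proof (Rabs_pos y). pose proof (Rabs_pos ((t - x) / (lam q * y) - IZR m)).
    assert (0 <= lam q * Rabs y) by nra. nra. }
  assert (Hsm : d1 ^ 2 + y ^ 2 < eta).
  { assert (d1 ^ 2 <= y ^ 2) by (rewrite <- (pow2_abs d1), <- (pow2_abs y); apply pow_incr;
       split; [apply Rabs_pos | auto]).
    assert (y ^ 2 < dl ^ 2) by (rewrite <- (pow2_abs y); pose proof (Rabs_pos y); simpl; nra).
    assert (dl ^ 2 <= dl) by (simpl; nra). lra. }
  exists (mapply (Mat2 a b cc d) (mapply (Tz m) (x, y))). split.
  { apply orbit_mul; [exact HC | apply orbit_mul; auto; apply Gq_Tz]. }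
  rewrite mapply_Tz. unfold mapply; cbn [fst snd m11 m12 m21 m22].
  set (e1 := a * d1 + b * y). set (e2 := cc * d1 + d * y).
  assert (He12 : e1 ^ 2 + e2 ^ 2 < eps / 4).
  { pose proof (cauchy2 a b d1 y). pose proof (cauchy2 cc d d1 y).
    assert (e1 ^ 2 + e2 ^ 2 <= K * (d1 ^ 2 + y ^ 2)) by (unfold e1, e2, K in *; replace ((a^2+b^2+cc^2+d^2) * (d1^2+y^2)) with ((a^2+b^2)*(d1^2+y^2) + (cc^2+d^2)*(d1^2+y^2)) by ring; lra).
    assert (K * (d1 ^ 2 + y ^ 2) <= K * eta) by (apply Rmult_le_compat_l; lra). lra. }
  replace (a * (x + IZR m * lam q * y) + b * y - fst p) with (e1 + (t * (a * 1 + b * 0) - fst p))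
    by (unfold e1, d1; ring).
  replace (cc * (x + IZR m * lam q * y) + d * y - snd p) with (e2 + (t * (cc * 1 + d * 0) - snd p))
    by (unfold e2, d1; ring).
  pose proof (sum_sq2 e1 (t * (a * 1 + b * 0) - fst p)).
  pose proof (sum_sq2 e2 (t * (cc * 1 + d * 0) - snd p)).
  lra.
Qed.

Lemma scale_e1 M a : scale a (mapply M (1, 0)) = mapply M (a, 0).
Proof. destruct M; unfold scale, mapply; simpl. f_equal; ring. Qed.

Lemma part1 u : discrete (orbit q u) ->
     u = (0, 0) \/
     exists alpha : R, alpha <> 0 /\
       forall v, orbit q u v <-> exists z, Lambda q z /\ v = scale alpha z.
Proof.
  intros Hd. destruct (reduction u) as [[B [a [HB Ha]]] | Hs].
  - pose proof (Gq_det B HB) as HdB.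
    assert (Hu : u = mapply (minv B) (a, 0)) by (rewrite <- Ha, minv_l; auto).
    destruct (Req_dec a 0) as [Ha0|Ha0].
    + left. rewrite Hu, Ha0. destruct B; unfold mapply, minv; simpl. f_equal; ring.
    + right. exists a. split; auto. intro v. split.
      * intros [A [HA ->]]. exists (mapply (mmul A (minv B)) (1, 0)). split.
        -- exists (mmul A (minv B)). split; auto. apply Gq_mul; auto. apply Gq_minv; auto.
        -- rewrite scale_e1, mapply_mmul, <- Hu. reflexivity.
      * intros [z [[C [HC ->]] ->]]. rewrite scale_e1, <- Ha, <- mapply_mmul.
        exists (mmul C B). split; auto. apply Gq_mul; auto.
  - exfalso. destruct (Hd u (orbit_self u)) as [eps [Heps H]].
    set (h := eps / 2).
    destruct (dense u Hs (fst u + h, snd u) (h ^ 2 / 4)) as [v [Hv Hvd]].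
    { unfold h. simpl. nra. }
    cbn [fst snd] in Hvd.
    assert (Hvu : v = u).
    { apply H; auto.
      replace (fst v - fst u) with ((fst v - (fst u + h)) + h) by ring.
      pose proof (sum_sq2 (fst v - (fst u + h)) h).
      assert (h ^ 2 * 4 = eps ^ 2) by (unfold h; field).
      pose proof (pow2_ge_0 (snd v - snd u)). pose proof (pow2_ge_0 (fst v - (fst u + h))).
      assert (0 < h ^ 2) by (unfold h; simpl; nra). lra. }
    subst v. replace (fst u - (fst u + h)) with (- h) in Hvd by ring.
    replace (snd u - snd u) with 0 in Hvd by ring.
    assert (0 < h ^ 2) by (unfold h; simpl; nra). simpl in Hvd. nra.
Qed.

End Q.

Theorem mainTheorem1 (q : nat) (hq : (3 <= q)%nat) :
  (* (1) discrete orbits *)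
  (forall u : vec2, discrete (orbit q u) ->
     u = (0, 0) \/
     exists alpha : R, alpha <> 0 /\
       forall v, orbit q u v <-> exists z, Lambda q z /\ v = scale alpha z)
  /\
  (* (2) no lattice point strictly inside the ellipse Q_q = 1 *)
  (forall v : vec2, Lambda q v -> ~ (Qq q v < 1))
  /\
  (* (3) unimodularity of consecutive w_i *)
  ((forall i : nat, (i <= q - 2)%nat -> wedge (w q i) (w q (i + 1)) = 1)
   /\ wedge (w q 0) (w q (q - 1)) = 1)
  /\
  (* (4) unimodular pairs in Lambda_q are column pairs of G_q-matrices *)
  (forall u0 u1 : vec2, Lambda q u0 -> Lambda q u1 -> wedge u0 u1 = 1 ->
     (exists A, Gq q A /\ mapply A u0 = (1, 0) /\ mapply A u1 = (0, 1))
     /\ Gq q (cols u0 u1)).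
Proof.
  split; [exact (part1 q hq)|].
  split; [exact (part2 q hq)|].
  split; [exact (part3 q hq)|].
  exact (part4 q hq).
Qed.
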